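(* In the qubit–battery model, write (up to an irrelevant global phase) the target unitary as $V_{00}=\cos\theta$, $V_{01}=\sin\theta\,e^{i\gamma}$, $V_{10}=\sin\theta\,e^{i(\gamma+\varphi)}$, $V_{11}=-\cos\theta\,e^{i\varphi}$ with $\theta\in[0,\pi/2]$, $\gamma,\varphi\in\mathbb R$. Let $U_{SB}=|0\rangle\langle0|_S\otimes|0\rangle\langle0|_B+\sum_{n\ge1}\sum_{i,j}U^{(n)}_{ij}|i\rangle\langle j|_S\otimes|n-i\rangle\langle n-j|_B$ where, for a fixed $\bar\theta\in[0,\pi/2]$ and arbitrary real phases $\alpha_n,\gamma_n,\varphi_n$, $$U^{(n)}_{00}=\cos\bar\theta\,e^{i\alpha_n},\ U^{(n)}_{01}=\sin\bar\theta\,e^{i(\alpha_n+\gamma_n)},\ U^{(n)}_{10}=\sin\bar\theta\,e^{i(\alpha_n+\gamma_n+\varphi_n)},\ U^{(n)}_{11}=-\cos\bar\theta\,e^{i(\alpha_n+\varphi_n)}.$$ Then for every normalized battery state $|\beta\rangle_B=\sum_{n\ge1}\beta_n|n\rangle_B$ with $\beta_0=0$, $$\epsilon_C(\mathbf\Phi_{|\beta\rangle},\mathcal V)\ \ge\ \sin^2(\bar\theta-\theta)+\frac14\Big[\sin(2\bar\theta)\sin(2\theta)\,Q^{(1)}_\beta+\sin^2\bar\theta\,\sin^2\theta\,Q^{(2)}_\beta\Big],$$ where $Q^{(1)}_\beta=2-2\sum_{n\ge1}|\beta_n\beta_{n+1}|$ and $Q^{(2)}_\beta=2\big(1-\sum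_{n\ge1}|\beta_n\beta_{n+2}|\big)$.
   Context: Qubit–battery model: qubit $S$ with energy basis $|0\rangle,|1\rangle$, $H_S=\frac\omega2(|1\rangle\langle1|-|0\rangle\langle0|)$; oscillator $B$ with basis $\{|n\rangle\}_{n\ge0}$, $H_B=\omega\sum_n n|n\rangle\langle n|$. $V_{ij}=\langle i|V_S|j\rangle$, $\mathcal V(\cdot)=V_S\cdot V_S^\dagger$. Channel $\mathbf\Phi_{|\beta\rangle}(\rho)=\mathrm{Tr}_B[U_{SB}(\rho\otimes|\beta\rangle\langle\beta|)U_{SB}^\dagger]$, Kraus operators $K^{(n)}={}_B\langle n|U_{SB}|\beta\rangle_B$, Choi infidelity $\epsilon_C=1-\frac14\sum_n|\mathrm{Tr}[V_S^\dagger K^{(n)}]|^2$. *)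

(* Defs.v *)
From HB Require Import structures.
From mathcomp Require Import all_boot all_order all_algebra.
From mathcomp Require Import complex.
From mathcomp Require Import all_classical all_reals all_analysis.
Set Implicit Arguments. Unset Strict Implicit. Unset Printing Implicit Defensive.
Import Order.TTheory GRing.Theory Num.Theory.
Import numFieldNormedType.Exports.
Local Open Scope ring_scope.
Local Open Scope complex_scope.

Section QubitBattery.
Variable R : realType.
Local Notation C := (R[i]).

Definition expi (a : R) : C := (cos a) +i* (sin a).

Definition sqnormC (z : C) : R := let: a +i* b := z in a ^+ 2 + b ^+ 2.
Definition absC (z : C) : R := Num.sqrt (sqnormC z).

Definition Vtarget (theta gamma phi : R) : 'M[C]_2 :=
  \matrix_(i < 2, j < 2)
    if (i == 0 :> nat) && (j == 0 :> nat) then (cos theta)%:C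
    else if (i == 0 :> nat) then (sin theta)%:C * expi gamma
    else if (j == 0 :> nat) then (sin theta)%:C * expi (gamma + phi)
    else - (cos theta)%:C * expi phi.

(* The 2x2 block U^{(n)} (meaningful for n >= 1). *)
Definition Ublock (thb : R) (al ga ph : nat -> R) (n : nat) : 'M[C]_2 :=
  \matrix_(i < 2, j < 2)
    if (i == 0 :> nat) && (j == 0 :> nat) then (cos thb)%:C * expi (al n)
    else if (i == 0 :> nat) then (sin thb)%:C * expi (al n + ga n)
    else if (j == 0 :> nat) then (sin thb)%:C * expi (al n + ga n + ph n)
    else - (cos thb)%:C * expi (al n + ph n).

(* Matrix element <i|_S <k|_B U_SB |j>_S |m>_B of
   U_SB = |0><0| (x) |0><0| + sum_{n>=1} sum_{i,j} U^{(n)}_{ij} |i><j| (x) |n-i><n-j|.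
   The (i,j,n) term contributes iff k = n - i and m = n - j (both >= 0). *)
Definition USB_elem (thb : R) (al ga ph : nat -> R)
    (i : 'I_2) (k : nat) (j : 'I_2) (m : nat) : C :=
  (if [&& (i == 0 :> nat), (k == 0), (j == 0 :> nat) & (m == 0)] then 1 else 0)
  + (if (1 <= k + i)%N && (k + i == m + j)%N
     then Ublock thb al ga ph (k + i)%N i j else 0).

(* Kraus operator K^{(n)} = <n|_B U_SB |beta>_B, with |beta> = sum_m beta_m |m>.
   Only m = n + i - j <= n+1 can contribute, so the sum over m is finite. *)
Definition Kraus (thb : R) (al ga ph : nat -> R) (beta : nat -> C) (n : nat)
  : 'M[C]_2 :=
  \matrix_(i < 2, j < 2) \sum_(m < n.+2) USB_elem thb al ga ph i n j m * beta m.

Definition adjmx (M : 'M[C]_2) : 'M[C]_2 := (map_mx (@conjc R) M)^T.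

(* infinite sums are written as limits of partial sums (limn);
   all these series converge (nonnegative terms, bounded). *)
Definition choi_infidelity (V : 'M[C]_2) (K : nat -> 'M[C]_2) : R :=
  1 - 4^-1 * limn (fun N => \sum_(0 <= n < N) sqnormC (\tr (adjmx V *m K n))).

Definition Q1 (beta : nat -> C) : R :=
  2 - 2 * limn (fun N => \sum_(1 <= n < N) absC (beta n * beta n.+1)).
Definition Q2 (beta : nat -> C) : R :=
  2 * (1 - limn (fun N => \sum_(1 <= n < N) absC (beta n * beta n.+2))).

End QubitBattery.

(* Main.v *)
Require Import Defs.
From HB Require Import structures.
From mathcomp Require Import all_boot all_order all_algebra.
From mathcomp Require Import complex.
From mathcomp Require Import all_classical all_reals all_analysis.
From mathcomp Require Import zify ring lra.
Import Order.TTheory GRing.Theory Num.Theory.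
Import numFieldNormedType.Exports.
Local Open Scope ring_scope.
Local Open Scope complex_scope.
Local Open Scope classical_set_scope.
Set Implicit Arguments. Unset Strict Implicit. Unset Printing Implicit Defensive.

Section S.
Variable R : realType.
Local Notation C := (R[i]).

Lemma USB_beta thb al ga ph (beta : nat -> C) (hb : beta 0%N = 0) i n j m :
  USB_elem thb al ga ph i n j m * beta m =
  (if (1 <= n + i)%N && (n + i == m + j)%N then Ublock thb al ga ph (n + i)%N i j else 0) * beta m.
Proof.
rewrite /USB_elem; case: m => [|m]; first by rewrite hb !mulr0.
by rewrite !andbF add0r.
Qed.

Lemma Kraus_entry thb al ga ph (beta : nat -> C) (hb : beta 0%N = 0) n i j :
  Kraus thb al ga ph beta n i j =
  if (1 <= n + i)%N && (j <= n + i)%N then Ublock thb al ga ph (n + i)%N i j * beta (n + i - j)%N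
  else 0.
Proof.
rewrite /Kraus mxE.
under eq_bigr do rewrite USB_beta //.
case: ifP => [/andP[h1 h2]|hc].
  have lt : (n + i - j < n.+2)%N by have := ltn_ord i; lia.
  rewrite (bigD1 (Ordinal lt)) //=.
  rewrite big1 ?addr0.
    rewrite h1 /=; have -> : (n + i == n + i - j + j)%N by apply/eqP; lia.
    done.
  move=> k hk.
  case: ifP => [/andP[_ /eqP e]|]; last by rewrite mul0r.
  exfalso; move: hk => /eqP; apply; apply: val_inj => /=; lia.
rewrite big1 // => k _; case: ifP => [/andP[h1 /eqP e]|]; last by rewrite mul0r.
by exfalso; move: hc; rewrite h1 /=; lia.
Qed.


Lemma trE (M K : 'M[C]_2) : \tr (adjmx M *m K) =
  \sum_(i < 2) \sum_(j < 2) conjc (M j i) * K j i.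
Proof. by rewrite /mxtrace; apply: eq_bigr => i _; rewrite mxE; apply: eq_bigr => j _; rewrite !mxE. Qed.


Lemma sqnormCE (z : C) : sqnormC z = complex.Re z ^+ 2 + complex.Im z ^+ 2.
Proof. by case: z. Qed.

Lemma normE (z : C) : `|z| = (absC z)%:C.
Proof. by rewrite normc_def /absC sqnormCE. Qed.

Lemma absC_ge0 (z : C) : 0 <= absC z.
Proof. exact: sqrtr_ge0. Qed.

Lemma absCM (x y : C) : absC (x * y) = absC x * absC y.
Proof. by apply: complexI; rewrite rmorphM /= -!normE normrM. Qed.

Lemma absCD (x y : C) : absC (x + y) <= absC x + absC y.
Proof. by rewrite -lecR rmorphD /= -!normE ler_normD. Qed.

Lemma absC_sum (I : Type) (r : seq I) (P : pred I) (F : I -> C) :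
  absC (\sum_(i <- r | P i) F i) <= \sum_(i <- r | P i) absC (F i).
Proof.
rewrite -lecR rmorph_sum [X in _ <= X](eq_bigr (fun i => `|F i|)); last by move=> i _; rewrite normE.
by rewrite -normE; apply: ler_norm_sum.
Qed.

Lemma absC_real (x : R) : absC (x%:C) = `|x|.
Proof. by rewrite /absC /= expr0n /= addr0 sqrtr_sqr. Qed.

Lemma absC_expi (a : R) : absC (expi a) = 1.
Proof. rewrite /absC /= cos2Dsin2; exact: sqrtr1. Qed.

Lemma absCN (z : C) : absC (- z) = absC z.
Proof. by apply: complexI; rewrite -!normE normrN. Qed.

Lemma absCJ (z : C) : absC (conjc z) = absC z.
Proof. by case: z => a b; rewrite /absC /= sqrrN. Qed.

Lemma sqnorm_abs (z : C) : sqnormC z = absC z ^+ 2.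
Proof. rewrite /absC sqr_sqrtr // sqnormCE; exact: addr_ge0 (sqr_ge0 _) (sqr_ge0 _). Qed.

Lemma absV (theta gamma phi : R) (i j : 'I_2) : absC (Vtarget theta gamma phi i j) =
  if (i == j :> nat) then `|cos theta| else `|sin theta|.
Proof.
rewrite mxE; case: i => [[|[|//]] ?]; case: j => [[|[|//]] ?] /=;
by rewrite ?absCM ?absCN ?absC_real ?absC_expi ?mulr1.
Qed.

Lemma absU (thb : R) al ga ph m (i j : 'I_2) : absC (Ublock thb al ga ph m i j) =
  if (i == j :> nat) then `|cos thb| else `|sin thb|.
Proof.
rewrite mxE; case: i => [[|[|//]] ?]; case: j => [[|[|//]] ?] /=;
by rewrite ?absCM ?absCN ?absC_real ?absC_expi ?mulr1.
Qed.

Lemma T_bound (thb : R) al ga ph (beta : nat -> C) (hb : beta 0%N = 0) (theta gamma phi : R) n :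
  absC (\tr (adjmx (Vtarget theta gamma phi) *m Kraus thb al ga ph beta n)) <=
  2 * (`|cos theta| * `|cos thb|) * absC (beta n) +
  `|sin theta| * `|sin thb| * (absC (beta n.-1) + absC (beta n.+1)).
Proof.
rewrite trE !big_ord_recr !big_ord0 /= !add0r.
have h4 (a b c d : C) : absC (a + b + (c + d)) <= absC a + absC b + (absC c + absC d).
  apply: le_trans (absCD _ _) _; apply: lerD; apply: le_trans (absCD _ _) _ => //.
apply: le_trans (h4 _ _ _ _) _.
rewrite !absCM !absCJ !absV !Kraus_entry //.
have a0 : absC (0 : C) = 0 by rewrite /absC /= expr0n /= addr0 sqrtr0.
case: n => [|n] /=; rewrite ?absCM ?absU /= ?a0 ?hb ?mulr0 ?add0r ?addr0 ?addn0 ?addn1 ?subn0 ?subn1 /= ?a0.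
all: by rewrite le_eqVlt; apply/orP; left; apply/eqP; ring.
Qed.

Lemma sum_mono_succ (F : nat -> R) N : (forall n, 0 <= F n) ->
  \sum_(0 <= n < N) F n <= \sum_(0 <= n < N.+1) F n.
Proof. by move=> h; rewrite big_nat_recr //= lerDl. Qed.

Lemma sum_shift_le (F : nat -> R) m k N : (forall n, 0 <= F n) ->
  \sum_(m <= n < N) F (n + k)%N <= \sum_(0 <= n < N + k) F n.
Proof.
move=> h; elim: N => [|N IH]; first by rewrite big_geq // sumr_ge0.
case: (leqP m N) => hm; last by rewrite big_geq // sumr_ge0.
by rewrite big_nat_recr //= addSn big_nat_recr //= lerD2r.
Qed.

Lemma sum_pred_le (F : nat -> R) N : (forall n, 0 <= F n) -> F 0%N = 0 ->
  \sum_(0 <= n < N) F n.-1 <= \sum_(0 <= n < N) F n.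
Proof.
move=> h h0; apply: le_trans (sum_mono_succ _ (fun n => h n.-1)) _.
by rewrite big_nat_recl //= h0 add0r.
Qed.

Lemma limn_ge_nd (u : nat -> R) (B : R) : (forall n, 0 <= u n) ->
  (forall N, \sum_(0 <= n < N) u n <= B) ->
  (cvgn (fun N => \sum_(0 <= n < N) u n)) /\
  forall N, \sum_(0 <= n < N) u n <= limn (fun N => \sum_(0 <= n < N) u n).
Proof.
move=> h hB.
have nd : nondecreasing_seq (fun N => \sum_(0 <= n < N) u n).
  by apply: nondecreasing_series => n _ _; apply: h.
have cv : cvgn (fun N => \sum_(0 <= n < N) u n).
  by apply: nondecreasing_is_cvgn => //; exists B => _ [N _ <-].
by split => // N; apply: nondecreasing_cvgn_le.
Qed.

Lemma iterS_add k n : iter k succn n = (n + k)%N.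
Proof. by elim: k => [|k IH] /=; rewrite ?addn0 ?IH ?addnS. Qed.

Lemma sum_from1 (w : nat -> R) N : w 0%N = 0 ->
  \sum_(1 <= n < N) w n = \sum_(0 <= n < N) w n.
Proof.
move=> h; case: N => [|N]; first by rewrite !big_geq.
by rewrite [in RHS]big_ltn // h add0r.
Qed.

Lemma Pk_bound (beta : nat -> C) (hb : beta 0%N = 0)
  (hu : forall N, \sum_(0 <= n < N) absC (beta n) ^+ 2 <= 1) k N :
  \sum_(0 <= n < N) absC (beta n) * absC (beta (iter k succn n)) <=
  limn (fun N => \sum_(1 <= n < N) absC (beta n * beta (iter k succn n))).
Proof.
have a00 : absC (beta 0%N) = 0 by rewrite hb /absC /= expr0n /= addr0 sqrtr0.
have e : (fun N => \sum_(1 <= n < N) absC (beta n * beta (iter k succn n))) =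
         (fun N => \sum_(0 <= n < N) absC (beta n) * absC (beta (iter k succn n))).
  apply: funext => M; rewrite sum_from1; last by rewrite absCM a00 mul0r.
  by apply: eq_bigr => n _; rewrite absCM.
rewrite e; apply: (limn_ge_nd (B := 2) _ _).2.
  by move=> n; apply: mulr_ge0; apply: absC_ge0.
move=> M; apply: le_trans (_ : \sum_(0 <= n < M) (absC (beta n) ^+ 2 + absC (beta (n + k)%N) ^+ 2) <= _).
  apply: ler_sum => n _; rewrite iterS_add.
  have := absC_ge0 (beta n); have := absC_ge0 (beta (n + k)%N); nra.
rewrite big_split /= -[2]/(1 + 1); apply: lerD; first exact: hu.
have := @sum_shift_le (fun n => absC (beta n) ^+ 2) 0 k M (fun n => sqr_ge0 _).
move=> /le_trans; apply; exact: hu.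
Qed.
End S.

Unset Implicit Arguments. Set Strict Implicit.

Theorem mainTheorem4 (R : realType) (theta gamma phi thb : R)
    (al ga ph : nat -> R) (beta : nat -> R[i]) :
  0 <= theta <= pi / 2 ->
  0 <= thb <= pi / 2 ->
  beta 0%N = 0 ->
  (series (fun n => sqnormC (beta n)) @ \oo --> (1 : R)) ->
  sin (thb - theta) ^+ 2
    + 4^-1 * (sin (2 * thb) * sin (2 * theta) * Q1 beta
              + sin thb ^+ 2 * sin theta ^+ 2 * Q2 beta)
  <= choi_infidelity (Vtarget theta gamma phi) (Kraus thb al ga ph beta).
Proof.
move=> /andP[t0 t1] /andP[b0 b1] hb hcv.
pose a n := absC (beta n).
have ha : forall n, 0 <= a n by move=> n; apply: absC_ge0.
have a00 : a 0%N = 0 by rewrite /a hb /absC /= expr0n /= addr0 sqrtr0.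
have hu : forall N, \sum_(0 <= n < N) a n ^+ 2 <= 1.
  move=> N.
  have nd : nondecreasing_seq (series (fun n => sqnormC (beta n))).
    apply: nondecreasing_series => n _ _; rewrite sqnorm_abs; exact: sqr_ge0.
  have := nondecreasing_cvgn_le nd (cvgP _ hcv) N.
  rewrite (cvg_lim _ hcv) // seriesEnat /=.
  by under eq_bigr do rewrite sqnorm_abs.
have pi0 := pi_ge0 R.
have ct : 0 <= cos theta by apply: cos_ge0_pihalf; apply/andP; split; lra.
have cb : 0 <= cos thb by apply: cos_ge0_pihalf; apply/andP; split; lra.
have st : 0 <= sin theta by apply: sin_ge0_pi; apply/andP; split; lra.
have sb : 0 <= sin thb by apply: sin_ge0_pi; apply/andP; split; lra.
pose Cc := cos theta * cos thb; pose Ss := sin theta * sin thb.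
have Cc0 : 0 <= Cc by apply: mulr_ge0.
have Ss0 : 0 <= Ss by apply: mulr_ge0.
pose T n := \tr (adjmx (Vtarget theta gamma phi) *m Kraus thb al ga ph beta n).
have hT : forall n, sqnormC (T n) <= (2 * Cc * a n + Ss * (a n.-1 + a n.+1)) ^+ 2.
  move=> n; rewrite sqnorm_abs.
  have h := @T_bound R thb al ga ph beta hb theta gamma phi n.
  rewrite !ger0_norm // in h.
  rewrite !expr2; apply: ler_pM => //; exact: absC_ge0.
pose P1 := limn (fun N => \sum_(1 <= n < N) absC (beta n * beta n.+1)).
pose P2 := limn (fun N => \sum_(1 <= n < N) absC (beta n * beta n.+2)).
have hP1 : forall N, \sum_(0 <= n < N) a n * a n.+1 <= P1 := fun N => @Pk_bound R beta hb hu 1 N.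
have hP2 : forall N, \sum_(0 <= n < N) a n * a n.+2 <= P2 := fun N => @Pk_bound R beta hb hu 2 N.
have E : forall N, \sum_(0 <= n < N) (2 * Cc * a n + Ss * (a n.-1 + a n.+1)) ^+ 2 =
  4 * Cc ^+ 2 * \sum_(0 <= n < N) a n ^+ 2 + Ss ^+ 2 * \sum_(0 <= n < N) a n.-1 ^+ 2
  + Ss ^+ 2 * \sum_(0 <= n < N) a n.+1 ^+ 2
  + 4 * Cc * Ss * \sum_(0 <= n < N) a n * a n.-1
  + 4 * Cc * Ss * \sum_(0 <= n < N) a n * a n.+1
  + 2 * Ss ^+ 2 * \sum_(0 <= n < N) a n.-1 * a n.+1.
  move=> N; rewrite !mulr_sumr -!big_split; apply: eq_bigr => n _ /=; ring.
have s2 : forall N, \sum_(0 <= n < N) a n.-1 ^+ 2 <= 1.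
  move=> N; apply: le_trans (hu N).
  by apply: (@sum_pred_le R (fun n => a n ^+ 2)) => [n|]; [exact: sqr_ge0 | rewrite a00 expr0n].
have s3 : forall N, \sum_(0 <= n < N) a n.+1 ^+ 2 <= 1.
  move=> N; apply: le_trans (hu (N + 1)%N).
  have := @sum_shift_le R (fun n => a n ^+ 2) 0 1 N (fun n => sqr_ge0 _).
  by rewrite (eq_bigr (fun n => a n.+1 ^+ 2)) // => n _; rewrite addn1.
have s4 : forall N, \sum_(0 <= n < N) a n * a n.-1 <= P1.
  move=> N; apply: le_trans (hP1 N).
  rewrite (eq_bigr (fun n => (fun m => a m * a m.+1) n.-1)); last first.
    by move=> [|n] _ /=; rewrite ?a00 ?mul0r ?mulr0 // mulrC.
  apply: (@sum_pred_le R (fun m => a m * a m.+1)) => [n|]; last by rewrite a00 mul0r.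
  exact: mulr_ge0.
have s6 : forall N, \sum_(0 <= n < N) a n.-1 * a n.+1 <= P2.
  move=> N; apply: le_trans (hP2 N).
  rewrite (eq_bigr (fun n => (fun m => a m * a m.+2) n.-1)); last first.
    by move=> [|n] _ /=; rewrite ?a00 ?mul0r.
  apply: (@sum_pred_le R (fun m => a m * a m.+2)) => [n|]; last by rewrite a00 mul0r.
  exact: mulr_ge0.
pose M4 := 4 * Cc ^+ 2 * 1 + Ss ^+ 2 * 1 + Ss ^+ 2 * 1 + 4 * Cc * Ss * P1 + 4 * Cc * Ss * P1
  + 2 * Ss ^+ 2 * P2.
have hL : forall N, \sum_(0 <= n < N) sqnormC (T n) <= M4.
  move=> N; apply: le_trans (ler_sum _ (fun n _ => hT n)) _.
  rewrite E /M4; repeat apply: lerD; apply: ler_wpM2l => //; rewrite ?mulr_ge0 ?sqr_ge0 //.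
have nd : nondecreasing_seq (fun N => \sum_(0 <= n < N) sqnormC (T n)).
  by apply: nondecreasing_series => n _ _; rewrite sqnorm_abs; exact: sqr_ge0.
have cv : cvgn (fun N => \sum_(0 <= n < N) sqnormC (T n)).
  by apply: nondecreasing_is_cvgn => //; exists M4 => _ [N _ <-].
have hLim : limn (fun N => \sum_(0 <= n < N) sqnormC (T n)) <= M4.
  by apply: limr_le => //; apply: nearW => N; exact: hL.
rewrite /choi_infidelity /Q1 /Q2 -/P1 -/P2.
move: hLim; set Lim := limn _ => hLim.
have hs : sin (thb - theta) ^+ 2 = 1 - (cos thb * cos theta + sin thb * sin theta) ^+ 2.
  by rewrite sin2cos2 cosB.
rewrite hs !mulr_natl !sin_mulr2n !mulr2n.
move: hLim; rewrite /M4 /Cc /Ss => hLim.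
lra.
Qed.
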